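(* Consider a generalized Nash equilibrium problem (GNEP) with $N$ players in which player $\nu$ solves $\min_{x^\nu}\theta_\nu(x)$ subject to $c^\nu(x)\le 0$, where $\theta_\nu:\mathbb{R}^n\to\mathbb{R}$ and $c^\nu:\mathbb{R}^n\to\mathbb{R}^{r_\nu}$ are continuously differentiable. Let $(x^k)\subset\mathbb{R}^n$ be a sequence converging to $\bar x$ and, for each $\nu$, let $(\lambda^{\nu,k})\subset\mathbb{R}^{r_\nu}$ be vectors with $$\nabla_{x^\nu}\theta_\nu(x^k)+\nabla_{x^\nu}c^\nu(x^k)\lambda^{\nu,k}\to 0\quad\text{and}\quad \min\{-c^\nu(x^k),\lambda^{\nu,k}\}\to0$$ for every $\nu$. If GNEP-CPLD holds in $\bar x$, then there is a multiplier $\bar\lambda$ such that $(\bar x,\bar\lambda)$ is a KKT point of the GNEP.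
   Context: Variables: $x=(x^1,\ldots,x^N)\in\mathbb{R}^n$, $x^\nu\in\mathbb{R}^{n_\nu}$, $r=r_1+\cdots+r_N$; $\nabla f$ is the transposed Jacobian and $\nabla_{x^\nu}f$ its submatrix for the components $x^\nu$; $\min$ of vectors is componentwise. A pair $(x,\lambda)\in\mathbb{R}^{n+r}$, $\lambda=(\lambda^1,\ldots,\lambda^N)$, $\lambda^\nu\in\mathbb{R}^{r_\nu}$, is a KKT point of the GNEP if for every $\nu$: $\nabla_{x^\nu}\theta_\nu(x)+\nabla_{x^\nu}c^\nu(x)\lambda^\nu=0$ and $\min\{-c^\nu(x),\lambda^\nu\}=0$. Vectors $v_1,\dots,v_k$ are positively linearly dependent if $\sum_i\lambda_iv_i=0$ has a nontrivial solution with all $\lambda_i\ge0$. CPLD$_\nu$ at a point $x$ with $c^\nu(x)\le0$: whenever $\nabla_{x^\nu}c_i^\nu(x)$, $i\in I$, are positively linearly dependent for some $I\subset\{i:c_i^\nu(x)=0\}$, the partial gradients $\nabla_{x^\nu}c_i^\nu(y)$, $i\in I$, are linearly dependent for all $y$ in a neighbourhood of $x$. GNEP-CPLD holds at $x$ if $c^\nu(x)\le 0$ and CPLD$_\nu$ holds at $x$ for every $\nu$. *)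

(* Defs.v *)
From HB Require Import structures.
From mathcomp Require Import all_boot all_order all_algebra.
From mathcomp Require Import all_classical all_reals all_analysis.
Set Implicit Arguments. Unset Strict Implicit. Unset Printing Implicit Defensive.
Import Order.TTheory GRing.Theory Num.Theory.
Import numFieldNormedType.Exports.
Local Open Scope ring_scope.
Local Open Scope classical_set_scope.

(* Points of R^n are row vectors 'rV[R]_n.  The decision variables of
   player nu are the coordinates j with owner j = nu. *)

(* continuously differentiable f : R^n -> R: Fréchet differentiable
   everywhere, with derivative depending continuously on the point
   (in finite dimension: x |-> 'd f x v continuous for every v). *)
Definition C1 (R : realType) (n : nat) (f : 'rV[R]_n -> R) : Prop :=
  (forall x, differentiable f x) /\
  (forall v : 'rV[R]_n, continuous (fun x => 'd f x v)).

Definition pderiv (R : realType) (n : nat) (f : 'rV[R]_n -> R)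
  (x : 'rV[R]_n) (j : 'I_n) : R := 'd f x (delta_mx 0 j).

Definition pos_lin_dep (R : realType) (n r : nat) (I : {set 'I_r})
  (v : 'I_r -> 'I_n -> R) (J : 'I_n -> bool) : Prop :=
  exists a : 'I_r -> R,
    (forall i, i \in I -> 0 <= a i) /\
    (exists i, i \in I /\ a i != 0) /\
    (forall j, J j -> \sum_(i in I) a i * v i j = 0).

Definition lin_dep (R : realType) (n r : nat) (I : {set 'I_r})
  (v : 'I_r -> 'I_n -> R) (J : 'I_n -> bool) : Prop :=
  exists a : 'I_r -> R,
    (exists i, i \in I /\ a i != 0) /\
    (forall j, J j -> \sum_(i in I) a i * v i j = 0).

Definition CPLD_player (R : realType) (n r : nat) (J : 'I_n -> bool)
  (c : 'I_r -> 'rV[R]_n -> R) (x : 'rV[R]_n) : Prop :=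
  forall I : {set 'I_r},
    (forall i, i \in I -> c i x = 0) ->
    pos_lin_dep I (fun i => pderiv (c i) x) J ->
    \forall y \near x, lin_dep I (fun i => pderiv (c i) y) J.

Definition GNEP_CPLD (R : realType) (n N : nat) (owner : 'I_n -> 'I_N)
  (r : 'I_N -> nat) (c : forall nu : 'I_N, 'I_(r nu) -> 'rV[R]_n -> R)
  (x : 'rV[R]_n) : Prop :=
  forall nu : 'I_N,
    (forall i, c nu i x <= 0) /\
    CPLD_player (fun j => owner j == nu) (c nu) x.

Definition KKT_point (R : realType) (n N : nat) (owner : 'I_n -> 'I_N)
  (r : 'I_N -> nat) (theta : 'I_N -> 'rV[R]_n -> R)
  (c : forall nu : 'I_N, 'I_(r nu) -> 'rV[R]_n -> R)
  (x : 'rV[R]_n) (lam : forall nu : 'I_N, 'I_(r nu) -> R) : Prop :=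
  forall nu : 'I_N,
    (forall j, owner j = nu ->
       pderiv (theta nu) x j + \sum_(i < r nu) lam nu i * pderiv (c nu i) x j = 0) /\
    (forall i, Num.min (- c nu i x) (lam nu i) = 0).

(* Main.v *)
Require Import Defs.
From HB Require Import structures.
From mathcomp Require Import all_boot all_order all_algebra.
From mathcomp Require Import all_classical all_reals all_analysis.
From mathcomp Require Import ring lra.
Import Order.TTheory GRing.Theory Num.Theory.
Import numFieldNormedType.Exports.
Set Implicit Arguments. Unset Strict Implicit. Unset Printing Implicit Defensive.
Local Open Scope ring_scope.
Local Open Scope classical_set_scope.

Section Helpers.
Variable R : realType.

Lemma cvg_sumr (T : Type) (F : set_system T) {FF : Filter F} m
  (f : 'I_m -> T -> R) (a : 'I_m -> R) :
  (forall i, f i @ F --> a i) -> (fun x => \sum_(i < m) f i x) @ F --> \sum_(i < m) a i.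
Proof.
move=> h; apply: cvg_big => //.
exact: add_continuous.
Qed.

Lemma lim_uniq (T : Type) (F : set_system T) {FF : ProperFilter F} (f : T -> R) (a b : R) :
  f @ F --> a -> f @ F --> b -> a = b.
Proof. move=> ha hb; exact: (@cvg_unique R (@norm_hausdorff R R^o) (f @ F) _ a b ha hb). Qed.

Lemma squeeze0 (T : Type) (F : set_system T) {FF : Filter F} (f h : T -> R) :
  h @ F --> 0 -> (\forall k \near F, `|f k| <= `|h k|) -> f @ F --> 0.
Proof.
move=> /cvgr0Pnorm_lt hh hle; apply/cvgr0Pnorm_lt => e e0.
have := hh e e0; apply: filter_app; apply: filterS hle => k h1 h2.
exact: le_lt_trans h1 h2.
Qed.

Lemma ultra_fmap (T U : Type) (F : set_system T) (f : T -> U) :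
  UltraFilter F -> UltraFilter (f @ F).
Proof.
move=> FU; split; first exact: fmap_proper_filter.
move=> G GF sFG; rewrite predeqE => A; split; last exact: sFG.
move=> GA; have [//|FnA] := in_ultra_setVsetC (f @^-1` A) FU.
have GnA : G (~` A) by apply: sFG.
have G0 : G set0 by rewrite -(setICr A); exact: filterI.
by exfalso; exact: (filter_not_empty G G0).
Qed.

Lemma ultra_bounded (U : set_system nat) (FU : UltraFilter U) (f : nat -> R) :
  (forall k, 0 <= f k <= 1) -> exists l : R, f @ U --> l.
Proof.
move=> hf.
have FF : Filter U by exact: ultra_proper.
have hU : U (f @^-1` (`[0, 1] : set R)).
  have h1 : U setT by exact: filterT.
  apply: filterS h1 => k _.
  by rewrite /= in_itv /=; exact: hf.
have := @segment_compact R 0 1; rewrite compact_ultra => /(_ (f @ U)).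
move=> /(_ (@ultra_fmap _ _ U f FU) hU) [p [_ hp]].
by exists p.
Qed.

Lemma ultra_fin (T : Type) (U : set_system T) (FU : UltraFilter U) (X : eqType)
  (g : T -> X) (s : seq X) :
  U [set k | g k \in s] -> exists I, I \in s /\ U [set k | g k = I].
Proof.
have PF : ProperFilter U by exact: ultra_proper.
elim: s => [|a s IH] h.
  by exfalso; apply: (filter_not_empty U); apply: filterS h => k.
have [ha|hna] := in_ultra_setVsetC [set k | g k = a] FU.
  by exists a; rewrite mem_head.
have [I [Is HI]] : exists I, I \in s /\ U [set k | g k = I].
  apply: IH; apply: filterS (filterI h hna) => k [] /=.
  by rewrite in_cons => /orP [/eqP|//].
by exists I; rewrite in_cons Is orbT.
Qed.

Lemma cvg_eqlim (T : Type) (F : set_system T) (f : T -> R) (a b : R) :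
  f @ F --> a -> a = b -> f @ F --> b.
Proof. by move=> h <-. Qed.

End Helpers.


Lemma carath (R : realType) n m (J : 'I_n -> bool) (v : 'I_m -> 'I_n -> R) (k : nat) :
  forall (I : {set 'I_m}) (mu : 'I_m -> R), (#|I| <= k)%N ->
  (forall i, 0 <= mu i) -> (forall i, i \notin I -> mu i = 0) ->
  exists (I' : {set 'I_m}) (mu' : 'I_m -> R),
    [/\ I' \subset I, (forall i, 0 <= mu' i), (forall i, i \notin I' -> mu' i = 0),
        (forall j, J j -> \sum_i mu' i * v i j = \sum_i mu i * v i j) &
        ~ lin_dep I' v J].
Proof.
elim: k => [|k IH] I mu hI h0 hz.
  exists I, mu; split => //.
  move=> [a [[i [iI _]] _]].
  by move: hI; rewrite leqn0 => /eqP/cards0_eq => I0; rewrite I0 inE in iI.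
have [[a [[i0 [i0I a0]] ha]]|nd] := pselect (lin_dep I v J); last first.
  by exists I, mu; split.
have [b [hbz [i1 [i1I b1]] hb]] : exists b : 'I_m -> R,
    [/\ (forall i, i \notin I -> b i = 0), (exists i, i \in I /\ 0 < b i) &
        (forall j, J j -> \sum_i b i * v i j = 0)].
  have sumI : forall (s : R) j, J j ->
      \sum_i (if i \in I then s * a i else 0) * v i j = 0.
    move=> s j Jj.
    transitivity (s * \sum_(i in I) a i * v i j); last by rewrite ha // mulr0.
    rewrite mulr_sumr [RHS]big_mkcond /=; apply: eq_bigr => i _.
    by case: ifP => _; rewrite ?mul0r ?mulrA.
  case: (ltrgtP (a i0) 0) => [neg|pos|eq0]; last by rewrite eq0 eqxx in a0.
  - exists (fun i => if i \in I then -1 * a i else 0); split.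
    + by move=> i /negbTE ->.
    + by exists i0; rewrite i0I mulN1r oppr_gt0.
    + exact: sumI.
  - exists (fun i => if i \in I then 1 * a i else 0); split.
    + by move=> i /negbTE ->.
    + by exists i0; rewrite i0I mul1r.
    + exact: sumI.
pose P := fun i => (i \in I) && (0 < b i).
have Pi1 : P i1 by rewrite /P i1I b1.
case: (@arg_minP _ R _ i1 P (fun i => mu i / b i) Pi1) => ist /andP [isI bs] hmin.
pose s := mu ist / b ist.
have s0 : 0 <= s by rewrite /s divr_ge0 // ltW.
pose mu' := fun i => mu i - s * b i.
have h0' : forall i, 0 <= mu' i.
  move=> i; rewrite /mu' subr_ge0.
  case Pi : (P i).
    have := hmin i Pi; move: Pi => /andP [_ bi].
    by rewrite -/s ler_pdivlMr // mulrC.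
  case iI : (i \in I); last by rewrite hbz ?iI // mulr0.
  move: Pi; rewrite /P iI /= => /negbT; rewrite -leNgt => bi.
  by apply: le_trans (h0 i); rewrite mulr_ge0_le0.
have mus : mu' ist = 0.
  by rewrite /mu' /s divfK ?subrr // gt_eqF.
have hz' : forall i, i \notin I :\ ist -> mu' i = 0.
  move=> i; rewrite !inE negb_and negbK => /orP [/eqP -> //|iI].
  by rewrite /mu' hz // hbz // mulr0 subrr.
have hI' : (#|I :\ ist| <= k)%N.
  by move: hI; rewrite (cardsD1 ist I) isI.
have [I'' [mu'' [hsub h0'' hz'' hsum nd'']]] := IH _ _ hI' h0' hz'.
exists I'', mu''; split => //.
  by apply/fintype.subsetP => i /(fintype.subsetP hsub); rewrite !inE => /andP [].
move=> j Jj; rewrite hsum //.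
rewrite /mu'; under eq_bigr => i _ do rewrite mulrBl -mulrA.
by rewrite sumrB -mulr_sumr hb // mulr0 subr0.
Qed.

Lemma player (R : realType) n m (J : 'I_n -> bool) (t : 'rV[R]_n -> 'I_n -> R)
  (g : 'I_m -> 'rV[R]_n -> 'I_n -> R) (c : 'I_m -> 'rV[R]_n -> R)
  (xs : nat -> 'rV[R]_n) (xbar : 'rV[R]_n) (lams : nat -> 'I_m -> R) :
  (forall j, continuous (fun y => t y j)) ->
  (forall i j, continuous (fun y => g i y j)) ->
  (forall i, continuous (c i)) ->
  xs @ \oo --> xbar ->
  (forall j, J j -> (fun k => t (xs k) j + \sum_(i < m) lams k i * g i (xs k) j)
      @ \oo --> (0:R)) ->
  (forall i, (fun k => Num.min (- c i (xs k)) (lams k i)) @ \oo --> (0:R)) ->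
  (forall i, c i xbar <= 0) ->
  (forall I : {set 'I_m}, (forall i, i \in I -> c i xbar = 0) ->
     pos_lin_dep I (fun i => g i xbar) J ->
     \forall y \near xbar, lin_dep I (fun i => g i y) J) ->
  exists lam : 'I_m -> R,
    (forall j, J j -> t xbar j + \sum_(i < m) lam i * g i xbar j = 0) /\
    (forall i, Num.min (- c i xbar) (lam i) = 0).
Proof.
move=> ct cg cc cx hres hmin hc0 cpld.
have [U [UU sU]] := @ultraFilterLemma nat \oo _.
have FU : ProperFilter U by exact: ultra_proper.
have FF : Filter U by exact: ultra_proper.
have toU : forall (f : nat -> R) (l : R), f @ \oo --> l -> f @ U --> l.
  by move=> f l h A /h; exact: sU.
have cxU : xs @ U --> xbar by move=> A /cx; exact: sU.
have gU : forall i j, (fun k => g i (xs k) j) @ U --> g i xbar j.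
  by move=> i j; exact: (continuous_cvg _ (cg i j xbar) cxU).
have tU : forall j, (fun k => t (xs k) j) @ U --> t xbar j.
  by move=> j; exact: (continuous_cvg _ (ct j xbar) cxU).
have cU : forall i, (fun k => c i (xs k)) @ U --> c i xbar.
  by move=> i; exact: (continuous_cvg _ (cc i xbar) cxU).
pose A : {set 'I_m} := [set i | c i xbar == 0]%SET.
pose mu := fun k i => if i \in A then Num.max (lams k i) 0 else 0.
have hmu : forall i, (fun k => mu k i - lams k i) @ U --> 0.
  move=> i; have hm := toU _ _ (hmin i).
  apply: (@squeeze0 R nat U FF _ _ hm).
  case iA : (i \in A).
    apply: filterE => k; rewrite /mu iA maxEle minEle.
    case: ifP => hl; last by rewrite subrr normr0 normr_ge0.
    rewrite sub0r normrN ler0_norm //.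
    case: ifP => h2; last by rewrite ler0_norm.
    by rewrite ler_normr; apply/orP; right; rewrite lerN2.
  have cneg : c i xbar < 0.
    by rewrite lt_neqAle hc0 andbT; move: iA; rewrite /A inE => /negbT.
  pose d := - c i xbar / 2.
  have d0 : 0 < d by rewrite /d divr_gt0 // oppr_gt0.
  have h1 : \forall k \near U, d < - c i (xs k).
    apply: (cvgr_gt (- c i xbar)); first exact: cvgN.
    by rewrite /d ltr_pdivrMr // ltr_pMr ?oppr_gt0 // ltr1n.
  have h2 : \forall k \near U, `|Num.min (- c i (xs k)) (lams k i)| < d.
    by move: (toU _ _ (hmin i)) => /cvgr0Pnorm_lt; apply.
  move: h2; apply: filter_app; move: h1; apply: filter_app.
  apply: filterE => k /= k1 k2.
  rewrite /mu iA sub0r normrN.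
  move: k2; rewrite minEle; case: ifP => // _ k2.
  exfalso; have : d < `| - c i (xs k)| by apply: lt_le_trans k1 (ler_norm _).
  by rewrite ltNge (ltW k2).
have hres' : forall j, J j ->
    (fun k => t (xs k) j + \sum_(i < m) mu k i * g i (xs k) j) @ U --> 0.
  move=> j Jj.
  have -> : (fun k => t (xs k) j + \sum_(i < m) mu k i * g i (xs k) j) =
     (fun k => (t (xs k) j + \sum_(i < m) lams k i * g i (xs k) j) +
               \sum_(i < m) (mu k i - lams k i) * g i (xs k) j).
    apply: funext => k; rewrite -addrA -big_split /=; congr (_ + _).
    by apply: eq_bigr => i _; rewrite -mulrDl addrC subrK.
  apply: cvg_eqlim.
    apply: cvgD; first exact: (toU _ _ (hres j Jj)).
    apply: cvg_sumr => i; exact: cvgM (hmu i) (gU i j).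
  by rewrite big1 ?addr0 // => i _; rewrite mul0r.
have mu0 : forall k i, 0 <= mu k i.
  by move=> k i; rewrite /mu; case: ifP => // _; rewrite le_max lexx orbT.
have muz : forall k i, i \notin A -> mu k i = 0.
  by move=> k i /negbTE; rewrite /mu => ->.
have hC : forall k, exists p : {set 'I_m} * ('I_m -> R),
    [/\ p.1 \subset A, (forall i, 0 <= p.2 i), (forall i, i \notin p.1 -> p.2 i = 0),
        (forall j, J j -> \sum_(i < m) p.2 i * g i (xs k) j = \sum_(i < m) mu k i * g i (xs k) j) &
        ~ lin_dep p.1 (fun i => g i (xs k)) J].
  move=> k.
  have [I' [mu' [h1 h2 h3 h4 h5]]] :=
    @carath R n m J (fun i j => g i (xs k) j) #|A| A (mu k) (leqnn #|A|) (mu0 k) (muz k).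
  by exists (I', mu').
have [p hp] := choice hC.
have [I [_ hI]] : exists I, I \in enum [set: {set 'I_m}] /\ U [set k | (p k).1 = I].
  apply: ultra_fin => //.
  have h1 : U setT by exact: filterT.
  by apply: filterS h1 => k _ /=; rewrite mem_enum in_setT.
have hIne : exists k, (p k).1 = I.
  by have [k hk] := filter_ex hI; exists k.
have IA : I \subset A.
  by have [k <-] := hIne; have [h1 _ _ _ _] := hp k.
pose s := fun k => \sum_(i < m) (p k).2 i.
have s0 : forall k, 0 <= s k.
  by move=> k; apply: sumr_ge0 => i _; have [_ h _ _ _] := hp k; exact: h.
have s1 : forall k, 0 < 1 + s k.
  by move=> k; apply: ltr_pwDl => //; exact: s0.
have nus : forall k i, (p k).2 i <= s k.
  move=> k i; rewrite /s (bigD1 i) //= lerDl.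
  by apply: sumr_ge0 => l _; have [_ h _ _ _] := hp k; exact: h.
pose alpha := fun k i => (p k).2 i / (1 + s k).
pose beta := fun k => (1 + s k)^-1.
have alpha01 : forall i k, 0 <= alpha k i <= 1.
  move=> i k; have [_ h _ _ _] := hp k.
  rewrite /alpha divr_ge0 ?(ltW (s1 k)) //= ler_pdivrMr // mul1r.
  by apply: le_trans (nus k i) _; rewrite lerDr.
have beta01 : forall k, 0 <= beta k <= 1.
  move=> k; rewrite /beta invr_ge0 ?(ltW (s1 k)) //= invf_le1 // lerDl.
  exact: s0.
have [abar habar] := choice (fun i => ultra_bounded UU (alpha01 i)).
have [bbar hbbar] := ultra_bounded UU beta01.
have abar0 : forall i, 0 <= abar i.
  move=> i; apply: (cvgr_to_ge (habar i)).
  by apply: filterE => k; have /andP [] := alpha01 i k.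
have bbar0 : 0 <= bbar.
  apply: (cvgr_to_ge hbbar).
  by apply: filterE => k; have /andP [] := beta01 k.
have abarz : forall i, i \notin I -> abar i = 0.
  move=> i iI; apply: (lim_uniq (habar i)).
  apply: cvg_trans (near_eq_cvg (f := fun _ => 0) _) (cvg_cst 0).
  apply: filterS hI => k /= hk.
  by have [_ _ h _ _] := hp k; rewrite /alpha h ?mul0r // hk.
have hsum1 : \sum_(i < m) abar i + bbar = 1.
  apply: (lim_uniq (cvgD (cvg_sumr habar) hbbar)).
  have -> : ((fun k => \sum_(i < m) alpha k i) + beta) = (fun _ => 1 : R).
    apply: funext => k; change (\sum_(i < m) alpha k i + beta k = 1).
    rewrite /alpha /beta -mulr_suml -/(s k) -[X in _ + X]mul1r -mulrDl addrC.
    by rewrite mulfV // gt_eqF // s1.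
  exact: cvg_cst.
have hlim : forall j, J j ->
    bbar * t xbar j + \sum_(i < m) abar i * g i xbar j = 0.
  move=> j Jj.
  have E : (fun k => beta k * (t (xs k) j + \sum_(i < m) mu k i * g i (xs k) j)) =
      (fun k => beta k * t (xs k) j + \sum_(i < m) alpha k i * g i (xs k) j).
    apply: funext => k; have [_ _ _ h _] := hp k.
    rewrite -h // mulrDr mulr_sumr; congr (_ + _); apply: eq_bigr => i _.
    by rewrite /alpha /beta mulrA [_ * (p k).2 i]mulrC.
  have L1 : (fun k => beta k * (t (xs k) j + \sum_(i < m) mu k i * g i (xs k) j))
      @ U --> bbar * 0 by exact: cvgM hbbar (hres' j Jj).
  rewrite mulr0 in L1.
  have L2 : (fun k => beta k * t (xs k) j + \sum_(i < m) alpha k i * g i (xs k) j) @ U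
     --> bbar * t xbar j + \sum_(i < m) abar i * g i xbar j.
    apply: cvgD; first exact: cvgM hbbar (tU j).
    by apply: cvg_sumr => i; exact: cvgM (habar i) (gU i j).
  rewrite -E in L2.
  exact: (lim_uniq L2 L1).
have [b0|bn0] := eqVneq bbar 0.
  exfalso.
  have hs : \sum_(i < m) abar i = 1 by rewrite -hsum1 b0 addr0.
  have [i ai] : exists i, abar i != 0.
    apply: contrapT => H; move: hs; rewrite big1 => [/eqP|i _].
      by rewrite eq_sym oner_eq0.
    by apply: contrapT => /eqP ?; apply: H; exists i.
  have iI : i \in I by apply: contraNT ai => /abarz ->.
  have pld : pos_lin_dep I (fun i => g i xbar) J.
    exists abar; split; first by move=> l _; exact: abar0.
    split; first by exists i; split.
    move=> j Jj; rewrite -[RHS](hlim j Jj) b0 mul0r add0r big_mkcond /=.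
    apply: eq_bigr => l _; case: ifP => // /negbT /abarz ->.
    by rewrite mul0r.
  have act : forall i, i \in I -> c i xbar = 0.
    move=> l lI; have := fintype.subsetP IA l lI.
    by rewrite /A inE => /eqP.
  have near1 := cpld I act pld.
  have nU : U [set k | lin_dep I (fun i => g i (xs k)) J] by exact: (cxU _ near1).
  have nI : U ([set k | lin_dep I (fun i => g i (xs k)) J] `&` [set k | (p k).1 = I]).
    exact: filterI.
  have [k [k1 k2]] := @filter_ex _ U FU _ nI.
  have [_ _ _ _ h5] := hp k.
  by apply: h5; rewrite k2.
exists (fun i => abar i / bbar); split.
  move=> j Jj; apply: (mulfI bn0); rewrite mulr0 -[RHS](hlim j Jj) mulrDr mulr_sumr.
  congr (_ + _); apply: eq_bigr => i _.
  by rewrite mulrA mulrCA divff // mulr1.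
move=> i; case iA : (i \in A).
  move: iA; rewrite /A inE => /eqP ->; rewrite oppr0.
  by apply: min_l; exact: divr_ge0 (abar0 i) bbar0.
have iI : i \notin I.
  by apply: contraFN iA => /(fintype.subsetP IA).
rewrite abarz // mul0r; apply: min_r.
by rewrite oppr_ge0.
Qed.

Theorem theorem2p6 (R : realType) (n N : nat) (owner : 'I_n -> 'I_N)
  (r : 'I_N -> nat) (theta : 'I_N -> 'rV[R]_n -> R)
  (c : forall nu : 'I_N, 'I_(r nu) -> 'rV[R]_n -> R)
  (xs : nat -> 'rV[R]_n) (xbar : 'rV[R]_n)
  (lams : forall nu : 'I_N, nat -> 'I_(r nu) -> R) :
  (forall nu, C1 (theta nu)) ->
  (forall nu i, C1 (c nu i)) ->
  xs @ \oo --> xbar ->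
  (forall nu (j : 'I_n), owner j = nu ->
     (fun k => pderiv (theta nu) (xs k) j
               + \sum_(i < r nu) lams nu k i * pderiv (c nu i) (xs k) j)
       @ \oo --> (0 : R)) ->
  (forall nu (i : 'I_(r nu)),
     (fun k => Num.min (- c nu i (xs k)) (lams nu k i)) @ \oo --> (0 : R)) ->
  GNEP_CPLD owner c xbar ->
  exists lambar : forall nu : 'I_N, 'I_(r nu) -> R,
    KKT_point owner theta c xbar lambar.
Proof.
move=> hth hc cx hres hmin hcpld.
have H : forall nu, exists lam : 'I_(r nu) -> R,
    (forall j, owner j = nu ->
       pderiv (theta nu) xbar j + \sum_(i < r nu) lam i * pderiv (c nu i) xbar j = 0) /\
    (forall i, Num.min (- c nu i xbar) (lam i) = 0).
  move=> nu; have [cnu cpnu] := hcpld nu.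
  have [lam [h1 h2]] := @player R n (r nu) (fun j => owner j == nu)
    (fun y j => pderiv (theta nu) y j) (fun i y j => pderiv (c nu i) y j)
    (c nu) xs xbar (lams nu)
    (fun j => (hth nu).2 (delta_mx 0 j))
    (fun i j => (hc nu i).2 (delta_mx 0 j))
    (fun i x => differentiable_continuous ((hc nu i).1 x))
    cx
    (fun j Jj => hres nu j (eqP Jj))
    (hmin nu) cnu cpnu.
  exists lam; split => // j hj; apply: h1; exact/eqP.
exists (fun nu => sval (cid (H nu))).
move=> nu; exact: (svalP (cid (H nu))).
Qed.
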